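(* For every graph $G$, $\chi_{td}(\mathrm{cl}(G)) \leq 2\chi_{td}(G)+1$.
   Context: For a simple graph $G$ and a positive integer $k$, a proper $k$-total difference labeling of $G$ is a function $f: V(G)\to\{1,\dots,k\}$, extended to edges by $f(\{u,v\}) = |f(u)-f(v)|$, such that: (i) adjacent vertices receive different labels; (ii) two distinct edges sharing a vertex receive different labels; (iii) no edge receives the same label as either of its endpoints. $\chi_{td}(G)$ denotes the smallest $k$ for which such a labeling exists. The clone $\mathrm{cl}(G)$ of $G$ is the Cartesian product $G \,\square\, K_2$: it consists of two copies $\{x_i\}$ and $\{y_i\}$ of the vertex set $\{g_i\}$ of $G$, where $x_i x_j$ and $y_i y_j$ are edges iff $g_i g_j$ is an edge of $G$, and $x_i y_j$ is an edge iff $i=j$. *)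

(* Defs.v *)
From mathcomp Require Import all_boot.
Set Implicit Arguments. Unset Strict Implicit. Unset Printing Implicit Defensive.

Definition simple_graph (T : finType) (e : rel T) : Prop :=
  symmetric e /\ irreflexive e.

Definition absdiff (m n : nat) : nat := (m - n) + (n - m).

(* f : V(G) -> {1,..,k} is a proper k-total difference labeling; the edge
   uv gets label |f u - f v|. *)
Definition proper_td_labeling (T : finType) (e : rel T) (k : nat)
    (f : T -> nat) : Prop :=
  [/\ forall v, 1 <= f v <= k,
      forall u v, e u v -> f u != f v,
      forall u v w, e u v -> e u w -> v != w ->
        absdiff (f u) (f v) != absdiff (f u) (f w) &
      forall u v, e u v ->
        (absdiff (f u) (f v) != f u) && (absdiff (f u) (f v) != f v)].

Definition has_td_labeling (T : finType) (e : rel T) (k : nat) : Prop :=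
  exists f : T -> nat, proper_td_labeling e k f.

Definition is_chi_td (T : finType) (e : rel T) (k : nat) : Prop :=
  has_td_labeling e k /\ forall j, j < k -> ~ has_td_labeling e j.

(* The clone cl(G) = G [] K_2 on vertex set bool * T:
   (b, g) is x_g if b = false and y_g if b = true. *)
Definition clone (T : finType) (e : rel T) : rel (bool * T) :=
  fun p q => ((p.1 == q.1) && e p.2 q.2) || ((p.1 != q.1) && (p.2 == q.2)).

(* Main.v *)
Require Import Defs.
From mathcomp Require Import all_boot.
From mathcomp Require Import zify.
From Stdlib Require Import Classical.

Lemma min_exists (T : finType) (e : rel T) n :
  has_td_labeling e n -> exists k', is_chi_td e k' /\ k' <= n.
Proof.
elim: n {-2}n (leqnn n) => [|N IH] n Hn H.
  exists n; split => //; split => // j Hj; have : n = 0 by lia.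
  by move=> Hn0; rewrite Hn0 in Hj.
case: (classic (exists j, j < n /\ has_td_labeling e j)).
  move=> [j [Hj Hh]].
  have [k' [Hk Hk']] := IH j ltac:(lia) Hh.
  exists k'; split => //; lia.
move=> Hno; exists n; split => //; split => // j Hj Hh.
by apply: Hno; exists j.
Qed.

Lemma clone_lab (T : finType) (e : rel T) (k : nat) (f : T -> nat) :
  simple_graph e -> proper_td_labeling e k f ->
  proper_td_labeling (clone e) (2 * k + 1)
    (fun p => f p.2 + (if p.1 then k.+1 else 0)).
Proof.
move=> [Hsym Hirr] [Hr Hi Hii Hiii].
have B : forall v, 1 <= f v <= k by [].
split.
- move=> [b t] /=; have := B t; case: b; lia.
- move=> [b t] [b' t']; rewrite /clone /=.
  case: b; case: b' => /=; rewrite ?orbF ?andbF /=.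
  + move=> /Hi; lia.
  + move=> /eqP ->; lia.
  + move=> /eqP ->; lia.
  + move=> /Hi; lia.
- move=> [b t] [b' t'] [b'' t'']; rewrite /clone /= /absdiff.
  have := B t; have := B t'; have := B t''.
  case: b; case: b'; case: b'' => /=; rewrite ?orbF ?andbF ?andbT ?orbT /=;
   move=> H1 H2 H3.
  all: try (move=> /eqP <- /eqP <-; by rewrite eqxx).
  all: try (move=> Ha Hb Hne; have Hne' : t' != t'' by
              apply: contra Hne => /eqP ->).
  all: try (have := Hii _ _ _ Ha Hb Hne'; rewrite /absdiff; lia).
  all: try (move=> Ha /eqP Hb _; subst; have := Hi _ _ Ha; lia).
  all: try (move=> /eqP Ha Hb _; subst; have := Hi _ _ Hb; lia).
- move=> [b t] [b' t']; rewrite /clone /= /absdiff.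
  have := B t; have := B t'.
  case: b; case: b' => /=; rewrite ?orbF ?andbF /=; move=> H1 H2.
  + move=> /Hiii; rewrite /absdiff; lia.
  + move=> /eqP ->; lia.
  + move=> /eqP ->; lia.
  + move=> /Hiii; rewrite /absdiff; lia.
Qed.

Theorem mainTheorem8 (T : finType) (e : rel T) (k : nat) :
  simple_graph e -> is_chi_td e k ->
  exists k', is_chi_td (clone e) k' /\ k' <= 2 * k + 1.
Proof.
move=> Hs [[f Hf] _].
apply: min_exists; exists (fun p => f p.2 + (if p.1 then k.+1 else 0)).
exact: clone_lab.
Qed.
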